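(* Let $\mathfrak{p}$ be a prime ideal in a pc monoid $A$. Then: (1) $A/\mathfrak{p}$ is a cancellative monoid; (2) if $A$ is pctf, then $(A/\mathfrak{p})^+$ is a torsionfree pointed group; (3) if $A$ is cancellative and normal, then $A/\mathfrak{p}$ is cancellative and normal.
   Context: A monoid is a pointed commutative monoid (basepoint $0$, $0\cdot a=0$, identity $1$). An ideal is a subset $I\ni0$ with $AI\subseteq I$; $A/I$ collapses $I$ to $0$; a proper ideal $\mathfrak{p}$ is prime if $A\setminus\mathfrak{p}$ is multiplicatively closed. $A$ is cancellative if $ac=bc$ with $c\ne0$ implies $a=b$; pc if $A\cong C/I$ with $C$ cancellative; pctf if $A\cong C/I$ with $C$ cancellative and torsionfree ($a^n=b^n$ for some $n\ge1$ implies $a=b$). For cancellative $C$, the pointed group completion $C^+$ is the group completion of $C\setminus\{0\}$ with a basepoint adjoined; a pointed group is torsionfree if its underlying group (without basepoint) is. The normalization of a cancellative $A$ is $A_{\mathrm{nor}}=\{\alpha\in A^+:\alpha^n\in A\text{ for some }n\ge1\}$ and $A$ is normal if $A=A_{\mathrm{nor}}$. *)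

(* Defs.v *)
From Stdlib Require Import Classical ClassicalDescription ProofIrrelevance Arith.

Record PMonoid := {
  car :> Type;
  pmul : car -> car -> car;
  pone : car;
  pzero : car;
  pmul_assoc : forall a b c, pmul a (pmul b c) = pmul (pmul a b) c;
  pmul_comm : forall a b, pmul a b = pmul b a;
  pmul_one : forall a, pmul pone a = a;
  pmul_zero : forall a, pmul pzero a = pzero
}.

Arguments pmul {_} _ _.
Arguments pone {_}.
Arguments pzero {_}.

Definition ppow {A : PMonoid} (a : A) (n : nat) : A := Nat.iter n (pmul a) pone.

Record Ideal (A : PMonoid) := {
  ideal_pred :> A -> Prop;
  ideal_zero : ideal_pred pzero;
  ideal_mul : forall a x, ideal_pred x -> ideal_pred (pmul a x)
}.

Definition prime_ideal {A : PMonoid} (p : Ideal A) : Prop :=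
  (exists a : A, ~ p a) /\
  (forall a b : A, ~ p a -> ~ p b -> ~ p (pmul a b)).

(* Quotient A/I: collapse I to 0.  Elements: 0 and the elements outside I. *)
Definition qcar {A : PMonoid} (I : Ideal A) : Type :=
  { a : A | a = pzero \/ ~ I a }.

Definition qproj {A : PMonoid} (I : Ideal A) (a : A) : qcar I :=
  match excluded_middle_informative (I a) with
  | left _ => exist _ pzero (or_introl eq_refl)
  | right h => exist _ a (or_intror h)
  end.

Definition qmul {A : PMonoid} (I : Ideal A) (x y : qcar I) : qcar I :=
  qproj I (pmul (proj1_sig x) (proj1_sig y)).

Lemma qcar_eq {A : PMonoid} (I : Ideal A) (x y : qcar I) :
  proj1_sig x = proj1_sig y -> x = y.
Proof.
  destruct x as [x hx], y as [y hy]; simpl; intros ->.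
  f_equal; apply proof_irrelevance.
Qed.

Lemma qproj_val {A : PMonoid} (I : Ideal A) (a : A) :
  proj1_sig (qproj I a) = (if excluded_middle_informative (I a) then pzero else a).
Proof. unfold qproj; destruct (excluded_middle_informative (I a)); reflexivity. Qed.

Lemma qproj_in {A : PMonoid} (I : Ideal A) (a : A) :
  I (proj1_sig (qproj I a)) <-> I a.
Proof.
  rewrite qproj_val; destruct (excluded_middle_informative (I a)) as [h|h];
  split; intro; auto; apply ideal_zero.
Qed.

Lemma qmul_val {A : PMonoid} (I : Ideal A) (x y : qcar I) :
  proj1_sig (qmul I x y) =
  (if excluded_middle_informative (I (pmul (proj1_sig x) (proj1_sig y)))
   then pzero else pmul (proj1_sig x) (proj1_sig y)).
Proof. apply qproj_val. Qed.

Lemma q_assoc {A : PMonoid} (I : Ideal A) (x y z : qcar I) :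
  qmul I x (qmul I y z) = qmul I (qmul I x y) z.
Proof.
  apply qcar_eq; rewrite !qmul_val.
  destruct x as [x hx], y as [y hy], z as [z hz]; simpl.
  destruct (excluded_middle_informative (I (pmul y z))) as [h1|h1];
  destruct (excluded_middle_informative (I (pmul x y))) as [h2|h2].
  - rewrite (pmul_comm _ x pzero), !pmul_zero.
    destruct (excluded_middle_informative (I pzero)); reflexivity.
  - rewrite (pmul_comm _ x pzero), pmul_zero.
    destruct (excluded_middle_informative (I pzero)) as [_|n]; [|now destruct n; apply ideal_zero].
    destruct (excluded_middle_informative (I (pmul (pmul x y) z))) as [|n]; auto.
    destruct n; rewrite <- pmul_assoc; now apply ideal_mul.
  - rewrite pmul_zero.
    destruct (excluded_middle_informative (I pzero)) as [_|n]; [|now destruct n; apply ideal_zero].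
    destruct (excluded_middle_informative (I (pmul x (pmul y z)))) as [|n]; auto.
    destruct n; rewrite pmul_assoc, pmul_comm; now apply ideal_mul.
  - rewrite pmul_assoc; reflexivity.
Qed.

Lemma q_comm {A : PMonoid} (I : Ideal A) (x y : qcar I) : qmul I x y = qmul I y x.
Proof. unfold qmul; rewrite pmul_comm; reflexivity. Qed.

Definition qone {A : PMonoid} (I : Ideal A) : qcar I := qproj I pone.
Definition qzero {A : PMonoid} (I : Ideal A) : qcar I :=
  exist _ pzero (or_introl eq_refl).

Lemma q_one {A : PMonoid} (I : Ideal A) (x : qcar I) : qmul I (qone I) x = x.
Proof.
  apply qcar_eq; rewrite qmul_val; unfold qone; rewrite qproj_val.
  destruct x as [x hx]; simpl.
  destruct (excluded_middle_informative (I pone)) as [h|h].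
  - rewrite pmul_zero.
    destruct (excluded_middle_informative (I pzero)) as [_|n];
      [|now destruct n; apply ideal_zero].
    destruct hx as [->|hx]; auto.
    exfalso; apply hx; rewrite <- (pmul_one _ x), pmul_comm; now apply ideal_mul.
  - rewrite pmul_one; destruct (excluded_middle_informative (I x)); auto.
    destruct hx as [->|hx]; auto; contradiction.
Qed.

Lemma q_zero {A : PMonoid} (I : Ideal A) (x : qcar I) : qmul I (qzero I) x = qzero I.
Proof.
  apply qcar_eq; rewrite qmul_val; simpl; rewrite pmul_zero.
  destruct (excluded_middle_informative (I pzero)); reflexivity.
Qed.

Definition quot (A : PMonoid) (I : Ideal A) : PMonoid :=
  {| car := qcar I; pmul := qmul I; pone := qone I; pzero := qzero I;
     pmul_assoc := q_assoc I; pmul_comm := q_comm I;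
     pmul_one := q_one I; pmul_zero := q_zero I |}.

Definition pm_iso (A B : PMonoid) : Prop :=
  exists f : A -> B,
    (forall x y, f x = f y -> x = y) /\ (forall y, exists x, f x = y) /\
    f pone = pone /\ f pzero = pzero /\
    (forall a b, f (pmul a b) = pmul (f a) (f b)).

Definition cancellative (A : PMonoid) : Prop :=
  forall a b c : A, pmul a c = pmul b c -> c <> pzero -> a = b.

Definition torsionfree (A : PMonoid) : Prop :=
  forall (a b : A) (n : nat), 0 < n -> ppow a n = ppow b n -> a = b.

Definition pc (A : PMonoid) : Prop :=
  exists (C : PMonoid) (I : Ideal C), cancellative C /\ pm_iso A (quot C I).

Definition pctf (A : PMonoid) : Prop :=
  exists (C : PMonoid) (I : Ideal C),
    cancellative C /\ torsionfree C /\ pm_iso A (quot C I).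

(* Pointed group completion A^+ (for cancellative A): its group part is the
   group of fractions a/b with a, b in A \ {0}, represented by pairs (a, b)
   modulo (a,b) ~ (c,d) iff a d = c b; the basepoint is adjoined separately. *)
Definition gc_el {A : PMonoid} (x : A * A) : Prop :=
  fst x <> pzero /\ snd x <> pzero.
Definition gc_eq {A : PMonoid} (x y : A * A) : Prop :=
  pmul (fst x) (snd y) = pmul (fst y) (snd x).
Definition gc_mul {A : PMonoid} (x y : A * A) : A * A :=
  (pmul (fst x) (fst y), pmul (snd x) (snd y)).
Definition gc_one {A : PMonoid} : A * A := (pone, pone).
Definition gc_pow {A : PMonoid} (x : A * A) (n : nat) : A * A :=
  Nat.iter n (gc_mul x) gc_one.
Definition gc_of {A : PMonoid} (a : A) : A * A := (a, pone).

Definition completion_torsionfree (A : PMonoid) : Prop :=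
  forall (x : A * A) (n : nat), gc_el x -> 0 < n ->
    gc_eq (gc_pow x n) gc_one -> gc_eq x gc_one.

Definition gc_in_A {A : PMonoid} (x : A * A) : Prop :=
  exists a : A, a <> pzero /\ gc_eq x (gc_of a).

(* normalization A_nor = {alpha in A^+ : alpha^n in A for some n >= 1};
   A normal iff A = A_nor (the basepoint is trivially in both). *)
Definition in_normalization {A : PMonoid} (x : A * A) : Prop :=
  gc_el x /\ exists n : nat, 0 < n /\ gc_in_A (gc_pow x n).

Definition normal (A : PMonoid) : Prop :=
  forall x : A * A, in_normalization x -> gc_in_A x.

(* Main.v *)
Require Import Defs.
From Stdlib Require Import Classical ClassicalDescription ProofIrrelevance Arith.

Lemma pmul_one_r (A : PMonoid) (a : A) : pmul a pone = a.
Proof. rewrite pmul_comm; apply pmul_one. Qed.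

Lemma pmul_zero_r (A : PMonoid) (a : A) : pmul a pzero = pzero.
Proof. rewrite pmul_comm; apply pmul_zero. Qed.

Lemma gc_pow_eq (A : PMonoid) (x : A * A) n :
  gc_pow x n = (ppow (fst x) n, ppow (snd x) n).
Proof. induction n as [|n IH]; [reflexivity|].
  change (gc_mul x (gc_pow x n) = (ppow (fst x) (S n), ppow (snd x) (S n))).
  rewrite IH. reflexivity. Qed.

Lemma qval_nz (C : PMonoid) (I : Ideal C) (x y : qcar I) :
  proj1_sig (qmul I x y) <> pzero ->
  proj1_sig (qmul I x y) = pmul (proj1_sig x) (proj1_sig y).
Proof.
  rewrite qmul_val. destruct (excluded_middle_informative _); [intro h; now destruct h|auto].
Qed.

Lemma qpow_nz (C : PMonoid) (I : Ideal C) (x : qcar I) n :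
  proj1_sig (@ppow (quot C I) x n) <> pzero ->
  proj1_sig (@ppow (quot C I) x n) = ppow (proj1_sig x) n.
Proof.
  induction n as [|n IH]; intro h.
  - simpl in *. unfold qone in *. rewrite qproj_val in *.
    destruct (excluded_middle_informative (I pone)); [now destruct h|reflexivity].
  - change (proj1_sig (qmul I x (@ppow (quot C I) x n)) <> pzero) in h.
    change (proj1_sig (qmul I x (@ppow (quot C I) x n)) = pmul (proj1_sig x) (ppow (proj1_sig x) n)).
    pose proof (qval_nz C I _ _ h) as e. rewrite e. rewrite IH; auto.
    intro h0. apply h. rewrite e, h0. apply pmul_zero_r.
Qed.

Lemma pc_cancel (A : PMonoid) : pc A ->
  forall a b c : A, pmul a c = pmul b c -> pmul a c <> pzero -> a = b.
Proof.
  intros (C & I & HC & f & inj & surj & f1 & f0 & fm) a b c e nz.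
  apply inj.
  assert (h1 : f (pmul a c) <> qzero I).
  { intro h. apply nz. apply inj. rewrite f0. exact h. }
  assert (hv : proj1_sig (f (pmul a c)) <> pzero).
  { intro h. apply h1. apply qcar_eq. exact h. }
  assert (hv' : proj1_sig (f (pmul b c)) <> pzero) by (rewrite <- e; exact hv).
  rewrite fm in hv, hv'.
  pose proof (qval_nz C I _ _ hv) as ea.
  pose proof (qval_nz C I _ _ hv') as eb.
  assert (ef : f (pmul a c) = f (pmul b c)) by (rewrite e; reflexivity).
  rewrite !fm in ef.
  assert (ev : proj1_sig (qmul I (f a) (f c)) = proj1_sig (qmul I (f b) (f c)))
    by (change (proj1_sig (pmul (f a) (f c)) = proj1_sig (pmul (f b) (f c))); now rewrite ef).
  rewrite ea, eb in ev.
  apply qcar_eq. apply (HC _ _ _ ev).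
  intro h0. apply hv. change (proj1_sig (qmul I (f a) (f c)) = pzero). rewrite ea, h0. apply pmul_zero_r.
Qed.

Lemma pctf_root (A : PMonoid) : pctf A ->
  forall (a b : A) n, 0 < n -> ppow a n = ppow b n -> ppow a n <> pzero -> a = b.
Proof.
  intros (C & I & HC & HT & f & inj & surj & f1 & f0 & fm) a b n hn e nz.
  assert (fp : forall x k, f (ppow x k) = @ppow (quot C I) (f x) k).
  { intros x k; induction k as [|k IH]; simpl; [exact f1|].
    change (f (pmul x (ppow x k)) = pmul (f x) (@ppow (quot C I) (f x) k)).
    now rewrite fm, IH. }
  assert (hv : proj1_sig (f (ppow a n)) <> pzero).
  { intro h. apply nz. apply inj. rewrite f0. apply qcar_eq. exact h. }
  assert (hv' : proj1_sig (f (ppow b n)) <> pzero) by (rewrite <- e; exact hv).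
  rewrite fp in hv, hv'.
  pose proof (qpow_nz C I _ _ hv) as ea.
  pose proof (qpow_nz C I _ _ hv') as eb.
  assert (ev : proj1_sig (@ppow (quot C I) (f a) n) = proj1_sig (@ppow (quot C I) (f b) n))
    by (rewrite <- !fp, e; reflexivity).
  rewrite ea, eb in ev.
  apply inj, qcar_eq. exact (HT _ _ _ hn ev).
Qed.

Section Q.
Variable A : PMonoid.
Variable p : Ideal A.
Hypothesis hp : prime_ideal p.

Lemma nz_out (x : quot A p) : x <> pzero -> ~ p (proj1_sig x).
Proof.
  intro h. destruct x as [v [hv|hv]]; simpl; auto.
  exfalso; apply h; apply qcar_eq; simpl; exact hv.
Qed.

Lemma out_nz (x : quot A p) : ~ p (proj1_sig x) -> x <> pzero.
Proof. intros h e; subst x; apply h; apply ideal_zero. Qed.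

Lemma qmul_out (x y : quot A p) : ~ p (proj1_sig x) -> ~ p (proj1_sig y) ->
  proj1_sig (pmul x y) = pmul (proj1_sig x) (proj1_sig y) /\
  ~ p (pmul (proj1_sig x) (proj1_sig y)).
Proof.
  intros hx hy. pose proof (proj2 hp _ _ hx hy) as h. split; auto.
  change (proj1_sig (qmul p x y) = pmul (proj1_sig x) (proj1_sig y)).
  rewrite qmul_val. destruct (excluded_middle_informative _); [contradiction|reflexivity].
Qed.

Lemma one_out : ~ p pone.
Proof.
  destruct (proj1 hp) as [a ha]. intro h. apply ha.
  rewrite <- (pmul_one_r A a). now apply ideal_mul.
Qed.

Lemma qpow_out (x : quot A p) n : ~ p (proj1_sig x) ->
  proj1_sig (ppow x n) = ppow (proj1_sig x) n /\ ~ p (ppow (proj1_sig x) n).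
Proof.
  intro hx. induction n as [|n [IH1 IH2]].
  - simpl. unfold qone. rewrite qproj_val. pose proof one_out.
    destruct (excluded_middle_informative (p pone)); [contradiction|auto].
  - change (proj1_sig (pmul x (ppow x n)) = pmul (proj1_sig x) (ppow (proj1_sig x) n)
      /\ ~ p (pmul (proj1_sig x) (ppow (proj1_sig x) n))).
    rewrite <- IH1 in IH2 |- *. apply qmul_out; auto.
Qed.
End Q.

Theorem proposition1p5 (A : PMonoid) (p : Ideal A) :
  prime_ideal p -> pc A ->
  cancellative (quot A p) /\
  (pctf A -> completion_torsionfree (quot A p)) /\
  (cancellative A -> normal A -> cancellative (quot A p) /\ normal (quot A p)).
Proof.
  intros hp hpc.
  assert (canc : cancellative (quot A p)).
  { intros a b c e hc. pose proof (nz_out A p c hc) as hc'.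
    destruct (classic (a = pzero)) as [ha|ha]; destruct (classic (b = pzero)) as [hb|hb].
    - congruence.
    - exfalso. rewrite ha, pmul_zero in e.
      destruct (qmul_out A p hp b c (nz_out A p b hb) hc') as [e1 e2].
      apply e2. rewrite <- e1, <- e. apply ideal_zero.
    - exfalso. rewrite hb, pmul_zero in e.
      destruct (qmul_out A p hp a c (nz_out A p a ha) hc') as [e1 e2].
      apply e2. rewrite <- e1, e. apply ideal_zero.
    - destruct (qmul_out A p hp a c (nz_out A p a ha) hc') as [e1 e2].
      destruct (qmul_out A p hp b c (nz_out A p b hb) hc') as [e3 e4].
      apply qcar_eq. apply (pc_cancel A hpc _ _ (proj1_sig c)).
      + rewrite <- e1, <- e3, e. reflexivity.
      + intro h; apply e2; rewrite h; apply ideal_zero. }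
  split; [exact canc|split].
  - intros htf [a b] n [ha hb] hn e. cbn [fst snd] in ha, hb.
    rewrite gc_pow_eq in e. unfold gc_eq, gc_one in *; cbn [fst snd] in *.
    rewrite pmul_one_r, pmul_one in e.
    rewrite pmul_one_r, pmul_one.
    pose proof (nz_out A p a ha) as ha'. pose proof (nz_out A p b hb) as hb'.
    destruct (qpow_out A p hp a n ha') as [ea pa].
    destruct (qpow_out A p hp b n hb') as [eb pb].
    apply qcar_eq. apply (pctf_root A htf _ _ n hn).
    + rewrite <- ea, <- eb, e. reflexivity.
    + intro h; apply pa; rewrite h; apply ideal_zero.
  - intros hca hnor. split; [exact canc|].
    intros [a b] [[ha hb] [n [hn [c [hc e]]]]]. cbn [fst snd] in ha, hb.
    rewrite gc_pow_eq in e. unfold gc_eq, gc_of in e; cbn [fst snd] in e.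
    rewrite pmul_one_r in e.
    pose proof (nz_out A p a ha) as ha'. pose proof (nz_out A p b hb) as hb'.
    pose proof (nz_out A p c hc) as hc'.
    destruct (qpow_out A p hp a n ha') as [ea pa].
    destruct (qpow_out A p hp b n hb') as [eb pb].
    destruct (qmul_out A p hp c (ppow b n) hc' (ltac:(rewrite eb; exact pb))) as [ec pc'].
    assert (eA : ppow (proj1_sig a) n = pmul (proj1_sig c) (ppow (proj1_sig b) n)).
    { rewrite <- ea, <- eb, <- ec, e. reflexivity. }
    assert (nzA : forall v : A, ~ p v -> v <> pzero).
    { intros v hv h; apply hv; rewrite h; apply ideal_zero. }
    destruct (hnor (proj1_sig a, proj1_sig b)) as [d [hd ed]].
    { split; [split; simpl; apply nzA; auto|].
      exists n; split; auto. exists (proj1_sig c); split; [apply nzA; auto|].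
      rewrite gc_pow_eq. unfold gc_eq, gc_of; simpl. rewrite pmul_one_r. exact eA. }
    unfold gc_eq, gc_of in ed; simpl in ed. rewrite pmul_one_r in ed.
    assert (pd : ~ p d).
    { intro h. apply ha'. rewrite ed, pmul_comm. now apply ideal_mul. }
    exists (exist _ d (or_intror pd) : quot A p). split.
    + apply out_nz; simpl; exact pd.
    + unfold gc_eq, gc_of; cbn [fst snd]. rewrite pmul_one_r.
      destruct (qmul_out A p hp (exist _ d (or_intror pd) : quot A p) b pd hb') as [e1 _].
      apply qcar_eq. rewrite e1. simpl. exact ed.
Qed.
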